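(* Let $(E,\mathscr{T},\le)$ be a $T_2$-preordered Tychonoff space, let $\mathcal{F}$ be the family of continuous isotone functions $f:E\to[0,1]$, and assume $G(\le)=\bigcap_{f\in\mathcal{F}}G_f$. Let $\beta:E\to\beta E$ be the Stone–Čech compactification, and let $\tilde{\mathcal{F}}$ be the set of continuous functions $\tilde f:\beta E\to[0,1]$ which are the unique continuous extensions of $f\circ\beta^{-1}:\beta(E)\to[0,1]$, $f\in\mathcal{F}$. Define the relation $\le_\beta$ on $\beta E$ by $G(\le_\beta)=\bigcap_{\tilde f\in\tilde{\mathcal{F}}}G_{\tilde f}$. Then $(\beta E,\mathscr{T}_\beta,\le_\beta)$ (with $\mathscr{T}_\beta$ the Stone–Čech topology) is a Hausdorff $T_2$-preorder compactification of $(E,\mathscr{T},\le)$ via $\beta$, and it is the largest Hausdorff $T_2$-preorder compactification, i.e. it dominates every Hausdorff $T_2$-preorder compactification of $E$. Moreover, every continuous isotone function $f:E\to[0,1]$ extends to a continuous isotone function on $(\beta E,\le_\beta)$.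
   Context: A topological preordered space is a triple $(E,\mathscr{T},\le)$, $\le$ a preorder; it is $T_2$-preordered if $G(\le)=\{(x,y):x\le y\}$ is closed in $E\times E$. Isotone: $x\le y\Rightarrow f(x)\le f(y)$. For $f:X\to[0,1]$, $G_f=\{(x,y):f(x)\le f(y)\}$. A preorder embedding is an injective continuous isotone map which is a homeomorphism onto its image and whose inverse on the image (with induced preorder) is isotone. A preorder compactification of $E$ is a preorder embedding $c:E\to cE$ into a compact topological preordered space $(cE,\mathscr{T}_c,\le_c)$ with $c(E)$ dense; it is a Hausdorff $T_2$-preorder compactification if moreover $cE$ is Hausdorff and $\le_c$ has closed graph. For preorder compactifications, $c_1\le c_2$ ($c_2$ dominates $c_1$) means there is a continuous isotone $C:c_2E\to c_1E$ with $C\circ c_2=c_1$. *)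

(* Defs.v *)
From HB Require Import structures.
From mathcomp Require Import all_boot all_order all_algebra.
From mathcomp Require Import all_classical all_reals all_analysis.
Set Implicit Arguments. Unset Strict Implicit. Unset Printing Implicit Defensive.
Import Order.TTheory GRing.Theory Num.Theory numFieldNormedType.Exports.
Local Open Scope classical_set_scope.
Local Open Scope ring_scope.

Section Defs.
Context (R : realType).

Definition is_preorder (T : Type) (le : T -> T -> Prop) :=
  (forall x, le x x) /\ (forall x y z, le x y -> le y z -> le x z).

Definition graph (T : Type) (le : T -> T -> Prop) : set (T * T) :=
  [set xy | le xy.1 xy.2].

Definition T2_preordered (T : topologicalType) (le : T -> T -> Prop) :=
  is_preorder le /\ closed (graph le).

Definition isotone (T U : Type) (leT : T -> T -> Prop) (leU : U -> U -> Prop)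
  (f : T -> U) := forall x y, leT x y -> leU (f x) (f y).

Definition completely_regular (T : topologicalType) :=
  forall (x : T) (B : set T), closed B -> ~ B x ->
    exists f : T -> R, [/\ continuous f, (forall y, 0 <= f y <= 1),
                           f x = 0 & forall y, B y -> f y = 1].

Definition tychonoff_space (T : topologicalType) :=
  completely_regular T /\ hausdorff_space T.

Definition cont01 (T : topologicalType) (f : T -> R) :=
  continuous f /\ (forall x, 0 <= f x <= 1).

Definition cont_isotone01 (T : topologicalType) (le : T -> T -> Prop)
  (f : T -> R) := cont01 f /\ isotone le (fun a b : R => a <= b) f.

Definition topological_embedding (T U : topologicalType) (c : T -> U) :=
  [/\ injective c, continuous c &
      forall A : set T, open A -> exists B : set U, open B /\ c @` A = range c `&` B].

Definition preorder_embedding (T U : topologicalType)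
  (leT : T -> T -> Prop) (leU : U -> U -> Prop) (c : T -> U) :=
  [/\ topological_embedding c, isotone leT leU c &
      forall x y, leU (c x) (c y) -> leT x y].

Definition preorder_compactification (T U : topologicalType)
  (leT : T -> T -> Prop) (leU : U -> U -> Prop) (c : T -> U) :=
  [/\ is_preorder leU, compact [set: U], preorder_embedding leT leU c
    & dense (range c)].

Definition hausdorff_T2_preorder_compactification (T U : topologicalType)
  (leT : T -> T -> Prop) (leU : U -> U -> Prop) (c : T -> U) :=
  [/\ preorder_compactification leT leU c, hausdorff_space U
    & closed (graph leU)].

Definition dominates (T U1 U2 : topologicalType)
  (le1 : U1 -> U1 -> Prop) (le2 : U2 -> U2 -> Prop)
  (c1 : T -> U1) (c2 : T -> U2) :=
  exists C : U2 -> U1, [/\ continuous C, isotone le2 le1 C &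
                          forall x, C (c2 x) = c1 x].

(** Stone–Cech compactification of E, given by its universal property:
    a compact Hausdorff space with a dense topological embedding
    beta : E -> bE such that every continuous E -> [0,1] extends
    continuously to bE -> [0,1]. *)
Definition stone_cech (T U : topologicalType) (beta : T -> U) :=
  [/\ compact [set: U], hausdorff_space U, topological_embedding beta,
      dense (range beta) &
      forall f : T -> R, cont01 f ->
        exists g : U -> R, cont01 g /\ forall x, g (beta x) = f x].

Definition le_beta (T U : topologicalType) (le : T -> T -> Prop)
  (beta : T -> U) (p q : U) :=
  forall f : T -> R, cont_isotone01 le f ->
  forall g : U -> R, continuous g -> (forall x, g (beta x) = f x) -> g p <= g q.

End Defs.

(* Main.v *)
Require Import Defs.
From HB Require Import structures.
From mathcomp Require Import all_boot all_order all_algebra.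
From mathcomp Require Import all_classical all_reals all_analysis lra.
Import Order.TTheory GRing.Theory Num.Theory numFieldNormedType.Exports.
Local Open Scope classical_set_scope.
Local Open Scope ring_scope.
Set Implicit Arguments. Unset Strict Implicit. Unset Printing Implicit Defensive.

Lemma up_closed (X : topologicalType) (le : X -> X -> Prop) :
  compact [set: X] -> closed (graph le) -> forall K : set X, closed K ->
  closed [set y | exists2 k, K k & le k y].
Proof.
move=> cX cG K cK y cly.
pose B := fun V : set X => K `&` [set k | exists2 v, V v & le k v].
have FF : Filter (filter_from (nbhs y) B).
  apply: filter_from_filter; first by exists setT; exact: filterT.
  move=> P Q nP nQ; exists (P `&` Q); first exact: filterI.
  by move=> k [Kk [v [Pv Qv] kv]]; split; split=> //; exists v.
have PF : ProperFilter (filter_from (nbhs y) B).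
  apply: filter_from_proper => // V nV.
  have [v [[k Kk kv] Vv]] := cly V nV.
  by exists k; split=> //; exists v.
have cK' : compact K := subclosed_compact cK cX (fun _ _ => I).
have FK : filter_from (nbhs y) B K by exists setT; [exact: filterT| move=> k []].
have [k0 [Kk0 clk0]] := cK' _ PF FK.
exists k0 => //; apply: (cG (k0, y)) => W nW.
case: nW => [[U V] /= [nU nV] UVW].
have [k [[Kk [v Vv kv]] Uk]] := clk0 (B V) U (ex_intro2 _ _ V nV (fun _ h => h)) nU.
by exists (k, v); split => //; apply: UVW.
Qed.

Lemma down_closed (X : topologicalType) (le : X -> X -> Prop) :
  compact [set: X] -> closed (graph le) -> forall K : set X, closed K ->
  closed [set y | exists2 k, K k & le y k].
Proof.
move=> cX cG K cK.
have cG' : closed (graph (fun a b => le b a)).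
  have -> : graph (fun a b => le b a) = unstable.swap @^-1` graph le.
    by apply/seteqP; split => -[a b].
  by apply: closed_comp => //; move=> p _; exact: swap_continuous.
exact: (@up_closed X (fun a b => le b a) cX cG' K cK).
Qed.

Definition decr (X : Type) (le : X -> X -> Prop) (S : set X) :=
  forall x y, le x y -> S y -> S x.
Definition incr (X : Type) (le : X -> X -> Prop) (S : set X) :=
  forall x y, le x y -> S x -> S y.

Lemma interp (R : realType) (X : topologicalType) (le : X -> X -> Prop) :
  compact [set: X] -> hausdorff_space X -> is_preorder le -> closed (graph le) ->
  forall Kc Wo : set X, closed Kc -> open Wo -> decr le Kc -> decr le Wo -> Kc `<=` Wo ->
  exists VL : set X * set X, [/\ open VL.1, closed VL.2, decr le VL.1, decr le VL.2 &
     [/\ Kc `<=` VL.1, VL.1 `<=` VL.2 & VL.2 `<=` Wo]].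
Proof.
move=> cX hX [lrefl ltrans] cG Kc Wo cK oW dK dW KW.
have nX := compact_normal hX cX.
have KA : Kc `&` ~` Wo = set0 by apply/disjoints_subset; rewrite setCK.
have [P [Q [oP oQ KP AQ PQ]]] := (@normal_openP R X).1 nX Kc (~` Wo) cK
   (open_closedC oW) KA.
exists (~` [set y | exists2 k, (~` P) k & le k y], [set y | exists2 k, (~` Q) k & le y k]).
split => /=.
- apply: closed_openC; apply: up_closed => //; exact: open_closedC.
- apply: down_closed => //; exact: open_closedC.
- move=> x y xy nUy [k nPk kx]; apply: nUy; exists k => //; exact: ltrans kx xy.
- move=> x y xy [k nQk yk]; exists k => //; exact: ltrans xy yk.
split.
- move=> x Kx [k nPk kx]; apply: nPk; apply: KP; exact: dK kx Kx.
- move=> x nUx; exists x; last exact: lrefl.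
  move=> Qx; apply: nUx; exists x; last exact: lrefl.
  move=> Px; have : (P `&` Q) x by [].
  by rewrite PQ.
- move=> x [k nQk xk]; apply: (dW _ _ xk).
  by apply: contrapT => nWk; apply: nQk; apply: AQ.
Qed.

Lemma near_all (T : topologicalType) (x : T) (P : nat -> T -> Prop) N :
  (forall k, (k < N)%N -> \forall y \near x, P k y) ->
  \forall y \near x, forall k, (k < N)%N -> P k y.
Proof.
elim: N => [|N IH] h; first by apply: filterE => y k.
have h1 := IH (fun k hk => h k (ltnW hk)).
have h2 := h N (ltnSn N).
apply: filterS2 h1 h2 => y H1 H2 k; rewrite ltnS leq_eqVlt => /orP[/eqP->//|].
exact: H1.
Qed.

Section Nachbin.
Context (R : realType) (X : topologicalType) (le : X -> X -> Prop).
Context (cX : compact [set: X]) (hX : hausdorff_space X)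
  (pre : is_preorder le) (cG : closed (graph le)).
Context (A0 B0 : set X) (cA : closed A0) (cB : closed B0)
  (iA : incr le A0) (dB : decr le B0) (AB : A0 `&` B0 = set0).

Definition IP (Kc Wo : set X) (VL : set X * set X) :=
  [/\ open VL.1, closed VL.2, decr le VL.1, decr le VL.2 &
     [/\ Kc `<=` VL.1, VL.1 `<=` VL.2 & VL.2 `<=` Wo]].

Definition ip (Kc Wo : set X) : set X * set X :=
  match pselect (exists VL, IP Kc Wo VL) with
  | left h => projT1 (cid h) | right _ => (set0, set0) end.

Lemma ipP Kc Wo : closed Kc -> open Wo -> decr le Kc -> decr le Wo -> Kc `<=` Wo ->
  IP Kc Wo (ip Kc Wo).
Proof.
move=> h1 h2 h3 h4 h5; rewrite /ip; case: pselect => [h|[]].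
  exact: (projT2 (cid h)).
exact: (interp R cX hX pre cG h1 h2 h3 h4 h5).
Qed.

Definition lev0 : (nat -> set X) * (nat -> set X) :=
  let VL := ip B0 (~` A0) in
  (fun j => if j == 0%N then VL.1 else ~` A0, fun j => if j == 0%N then VL.2 else ~` A0).

Fixpoint lev (n : nat) : (nat -> set X) * (nat -> set X) :=
  match n with
  | 0%N => lev0
  | n'.+1 => let UK := lev n' in
     (fun j => if odd j then (ip (UK.2 j./2) (UK.1 (j./2).+1)).1 else UK.1 j./2,
      fun j => if odd j then (ip (UK.2 j./2) (UK.1 (j./2).+1)).2 else UK.2 j./2)
  end.

Definition Inv (UK : (nat -> set X) * (nat -> set X)) (N : nat) :=
  (forall k, (k <= N)%N -> [/\ open (UK.1 k), decr le (UK.1 k) & UK.1 k `<=` ~` A0]) /\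
  (forall k, (k < N)%N -> [/\ closed (UK.2 k), decr le (UK.2 k), UK.1 k `<=` UK.2 k,
        UK.2 k `<=` UK.1 k.+1 & B0 `<=` UK.1 k]).

Lemma decrC (S : set X) : incr le S -> decr le (~` S).
Proof. by move=> iS x y xy nSy Sx; apply: nSy; exact: iS Sx. Qed.

Lemma parity (j : nat) : (exists m, j = m.*2) \/ (exists m, j = m.*2.+1).
Proof.
elim: j => [|j [[m ->]|[m ->]]]; first by left; exists 0%N.
  by right; exists m.
by left; exists m.+1; rewrite doubleS.
Qed.

Lemma InvP n : Inv (lev n) (2 ^ n).
Proof.
elim: n => [|n [IH1 IH2]].
  have oA : open (~` A0) by exact: closed_openC.
  have BA : B0 `<=` ~` A0.
    by move=> x Bx Ax; have : (A0 `&` B0) x by []; rewrite AB.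
  have [ho1 c2 d1 d2 [s1 s2 s3]] := ipP cB oA dB (decrC iA) BA.
  split=> k /=; rewrite expn0.
    case: k => [|[|//]] _ /=; first by split=> // x /s2 /s3.
    by split=> //; exact: decrC.
  by case: k => [|//] _ /=.
split=> k /=; rewrite expnS mul2n.
  move=> hk; have [[m Ek]|[m Ek]] := parity k; rewrite {}Ek in hk *.
    rewrite odd_double half_double.
    by apply: IH1; rewrite -leq_double.
  rewrite /= odd_double /= uphalf_double.
  have hm : (m < 2 ^ n)%N by rewrite -ltn_double.
  have [c1 d1 s1 s2 b1] := IH2 m hm.
  have [ho2 d2 _] := IH1 m.+1 hm.
  have [ho1 c2 dd1 dd2 [t1 t2 t3]] := ipP c1 ho2 d1 d2 s2.
  split=> //; apply: subset_trans t2 _; apply: subset_trans t3 _.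
  by case: (IH1 m.+1 hm).
move=> hk; have [[m Ek]|[m Ek]] := parity k; rewrite {}Ek in hk *.
  rewrite /= odd_double /=.
  rewrite !half_double !uphalf_double.
  have hm : (m < 2 ^ n)%N by rewrite -ltn_double.
  have [c1 d1 s1 s2 b1] := IH2 m hm.
  have [ho2 d2 _] := IH1 m.+1 hm.
  have [ho1 c2 dd1 dd2 [t1 t2 t3]] := ipP c1 ho2 d1 d2 s2.
  by split.
rewrite /= odd_double /=.
rewrite !uphalf_double !half_double.
have hm : (m < 2 ^ n)%N by rewrite -ltn_double; apply: ltn_trans hk; exact: ltnSn.
have [c1 d1 s1 s2 b1] := IH2 m hm.
have [ho2 d2 _] := IH1 m.+1 hm.
have [ho1 c2 dd1 dd2 [t1 t2 t3]] := ipP c1 ho2 d1 d2 s2.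
split=> // x /b1 /s1 /t1 //.
Qed.


Definition nin (S : set X) (x : X) : R := if asbool (S x) then 0 else 1.

Lemma nin01 S x : 0 <= nin S x <= 1.
Proof. by rewrite /nin; case: asboolP => _; rewrite ?lexx ?ler01. Qed.

Lemma nin_in S x : S x -> nin S x = 0.
Proof. by rewrite /nin; case: asboolP. Qed.

Lemma nin_out S x : ~ S x -> nin S x = 1.
Proof. by rewrite /nin; case: asboolP. Qed.

Lemma nin_sub S T x : S `<=` T -> nin T x <= nin S x.
Proof.
move=> ST; rewrite /nin; case: asboolP => Tx; case: asboolP => Sx;
  rewrite ?lexx ?ler01 //.
by exfalso; apply: Tx; apply: ST.
Qed.

Definition U n := (lev n).1.
Definition cnt n x : R := \sum_(k < 2 ^ n) nin (U n k) x.
Definition w n : R := (2 ^+ n)^-1.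
Definition g n x := cnt n x * w n.

Lemma sum_double (F : nat -> R) N :
  \sum_(j < N.*2) F j = \sum_(m < N) (F m.*2 + F m.*2.+1).
Proof.
elim: N => [|N IH]; first by rewrite !big_ord0.
by rewrite doubleS !big_ord_recr /= IH addrA.
Qed.

Lemma tele (F : nat -> R) N :
  \sum_(m < N) F m = \sum_(m < N) F m.+1 + F 0%N - F N.
Proof.
elim: N => [|N IH]; first by rewrite !big_ord0; lra.
rewrite !big_ord_recr /= IH; lra.
Qed.

Lemma w_gt0 n : 0 < w n.
Proof. by rewrite /w invr_gt0 exprn_gt0. Qed.

Lemma wS n : w n = 2 * w n.+1.
Proof.
rewrite /w exprS invfM mulrA mulfV ?mul1r //.
Qed.

Lemma w_exp n : (2 ^+ n) * w n = 1.
Proof. by rewrite /w mulfV // expf_neq0 // pnatr_eq0. Qed.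

Lemma cnt_bound n x : 0 <= cnt n x <= 2 ^+ n.
Proof.
apply/andP; split.
  by apply: sumr_ge0 => k _; case/andP: (nin01 (U n k) x).
apply: (@le_trans _ _ (\sum_(k < 2 ^ n) (1 : R))).
  by apply: ler_sum => k _; case/andP: (nin01 (U n k) x).
by rewrite sumr_const card_ord -natrX.
Qed.

Lemma g_bound n x : 0 <= g n x <= 1.
Proof.
have [h1 h2] := andP (cnt_bound n x); have wp := w_gt0 n.
apply/andP; split; first by rewrite /g mulr_ge0 // ltW.
by rewrite /g -(w_exp n) ler_wpM2r // ltW.
Qed.

Lemma U_decr n k : (k <= 2 ^ n)%N -> decr le (U n k).
Proof. by move=> hk; have [h _] := InvP n; case: (h k hk). Qed.

Lemma cnt_mono n x y : le x y -> cnt n x <= cnt n y.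
Proof.
move=> xy; apply: ler_sum => k _.
have dk := U_decr (ltnW (ltn_ord k)).
rewrite /nin; case: asboolP => Ux; case: asboolP => Uy; rewrite ?lexx ?ler01 //.
by exfalso; apply: Ux; exact: dk xy Uy.
Qed.

Lemma cnt_step n x : cnt n.+1 x <= 2 * cnt n x /\ 2 * cnt n x - 1 <= cnt n.+1 x.
Proof.
pose V m := (ip ((lev n).2 m) ((lev n).1 m.+1)).1.
have E : cnt n.+1 x = \sum_(m < 2 ^ n) (nin (U n m) x + nin (V m) x).
  rewrite /cnt expnS mul2n (sum_double (fun j => nin (U n.+1 j) x)); apply: eq_bigr => m _.
  by rewrite /U /= odd_double half_double uphalf_double.
have sub m : (m < 2 ^ n)%N -> U n m `<=` V m /\ V m `<=` U n m.+1.
  move=> hm; have [IH1 IH2] := InvP n.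
  have [c1 d1 s1 s2 b1] := IH2 m hm.
  have [ho2 d2 _] := IH1 m.+1 hm.
  have [ho1 c2 dd1 dd2 [t1 t2 t3]] := ipP c1 ho2 d1 d2 s2.
  split; first by move=> z /s1 /t1.
  by move=> z /t2 /t3.
rewrite E; split.
  apply: (@le_trans _ _ (\sum_(m < 2 ^ n) (nin (U n m) x + nin (U n m) x))).
    apply: ler_sum => m _; rewrite lerD2l; apply: nin_sub.
    by case: (sub m (ltn_ord m)).
  by rewrite big_split /= /cnt; lra.
apply: (@le_trans _ _ (\sum_(m < 2 ^ n) (nin (U n m) x + nin (U n m.+1) x))).
  rewrite big_split /= /cnt (tele (fun m => nin (U n m) x)) /=.
  have := nin01 (U n 0%N) x; have := nin01 (U n (2 ^ n)) x.
  move=> /andP[h1 h2] /andP[h3 h4]; lra.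
apply: ler_sum => m _; rewrite lerD2l; apply: nin_sub.
by case: (sub m (ltn_ord m)).
Qed.

Lemma g_step n x : g n.+1 x <= g n x /\ g n x - w n.+1 <= g n.+1 x.
Proof.
have [h1 h2] := cnt_step n x; have wp := w_gt0 n.+1.
rewrite /g (wS n); split; nra.
Qed.

Lemma g_dec x m k : g (m + k) x <= g m x.
Proof.
elim: k => [|k IH]; first by rewrite addn0.
by rewrite addnS; apply: le_trans IH; case: (g_step (m + k) x).
Qed.

Lemma g_low x n k : g n x - w n + w (n + k) <= g (n + k) x.
Proof.
elim: k => [|k IH]; first by rewrite addn0; lra.
rewrite addnS; have [_ h] := g_step (n + k) x; have := wS (n + k); lra.
Qed.

Lemma g_lowall x n m : g n x - w n <= g m x.
Proof.
have wp := w_gt0 n.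
case: (leqP m n) => hmn.
  have := g_dec x m (n - m); rewrite subnKC //; lra.
have := g_low x n (m - n); have := w_gt0 (n + (m - n)); rewrite subnKC ?(ltnW hmn) //; lra.
Qed.

Definition f x := inf (range (fun n => g n x)).

Lemma hlb x : has_lbound (range (fun n => g n x)).
Proof. by exists 0 => _ [n _ <-]; case/andP: (g_bound n x). Qed.

Lemma f_le n x : f x <= g n x.
Proof. by apply: ge_inf; [exact: hlb | exists n]. Qed.

Lemma f_ge n x : g n x - w n <= f x.
Proof. by apply: lb_le_inf; [exists (g 0%N x), 0%N | move=> _ [m _ <-]; exact: g_lowall]. Qed.

Lemma f_bound x : 0 <= f x <= 1.
Proof.
apply/andP; split.
  by apply: lb_le_inf; [exists (g 0%N x), 0%N | move=> _ [m _ <-]; case/andP: (g_bound m x)].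
by apply: le_trans (f_le 0 x) _; case/andP: (g_bound 0 x).
Qed.

Lemma f_iso : isotone le (fun a b : R => a <= b) f.
Proof.
move=> x y xy; apply: lb_le_inf; first by exists (g 0%N y), 0%N.
move=> _ [n _ <-]; apply: le_trans (f_le n x) _.
by rewrite /g ler_wpM2r ?cnt_mono // ltW // w_gt0.
Qed.

Lemma near_cnt n x :
  \forall y \near x, cnt n y <= cnt n x /\ cnt n x <= cnt n y + 1.
Proof.
have H : \forall y \near x, forall k, (k < 2 ^ n)%N ->
    (U n k x -> U n k y) /\ (~ U n k.+1 x -> ~ U n k y).
  apply: near_all => k hk.
  have [IH1 IH2] := InvP n.
  have [ho1 _ _] := IH1 k (ltnW hk).
  have [c1 _ s1 s2 _] := IH2 k hk.
  have h1 : \forall y \near x, U n k x -> U n k y.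
    case: (pselect (U n k x)) => Ux; last by apply: filterE.
    by apply: filterS (open_nbhs_nbhs (conj ho1 Ux)) => y Uy _.
  have h2 : \forall y \near x, ~ U n k.+1 x -> ~ U n k y.
    case: (pselect (U n k.+1 x)) => Ux; first by apply: filterE.
    have nK : ~ (lev n).2 k x by move=> /s2.
    apply: filterS (open_nbhs_nbhs (conj (closed_openC c1) nK)) => y nKy _ Uy.
    by apply: nKy; apply: s1.
  by apply: filterS2 h1 h2 => y a b; split.
apply: filterS H => y H; split.
  apply: ler_sum => k _; have [a b] := H k (ltn_ord k).
  rewrite /nin; case: asboolP => Uy; case: asboolP => Ux; rewrite ?lexx ?ler01 //.
  by exfalso; apply: Uy; apply: a.
rewrite /cnt (tele (fun k => nin (U n k) x)) /=.
have : \sum_(k < 2 ^ n) nin (U n k.+1) x <= \sum_(k < 2 ^ n) nin (U n k) y.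
  apply: ler_sum => k _; have [a b] := H k (ltn_ord k).
  rewrite /nin; case: asboolP => Ux; case: asboolP => Uy; rewrite ?lexx ?ler01 //.
  by exfalso; apply: (b Ux).
have := nin01 (U n 0%N) x; have := nin01 (U n (2 ^ n)) x.
move=> /andP[h1 h2] /andP[h3 h4]; lra.
Qed.

Lemma small_w e : 0 < e -> exists n, 2 * w n <= e.
Proof.
move=> e0; have h0 : 0 <= 2 / e by rewrite divr_ge0 // ltW.
set N := Num.Def.archi_bound (2 / e).
have h1 := archi_boundP h0.
have h2 : (N%:R : R) <= 2 ^+ N.
  by rewrite -natrX ler_nat ltnW // ltn_expl.
exists N; rewrite /w -[2 * _]/(2 / 2 ^+ N) ler_pdivrMr ?exprn_gt0 //.
have := lt_le_trans h1 h2; rewrite ltr_pdivrMr // => h; rewrite mulrC; exact: ltW.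
Qed.

Lemma f_cont : continuous f.
Proof.
move=> x; apply/cvgrPdist_le => e e0.
have [n hn] := small_w e0.
apply: filterS (near_cnt n x) => y [h1 h2].
have := f_le n x; have := f_ge n x; have := f_le n y; have := f_ge n y.
have wp := w_gt0 n.
have g1 : g n y <= g n x by rewrite /g ler_wpM2r // ltW.
have g2 : g n x <= g n y + w n.
  have : cnt n x * w n <= (cnt n y + 1) * w n by rewrite ler_wpM2r // ltW.
  by rewrite mulrDl mul1r.
move=> *; rewrite ler_norml; apply/andP; split; lra.
Qed.

Lemma nachbin_sep : exists f : X -> R, [/\ continuous f, (forall x, 0 <= f x <= 1),
  isotone le (fun a b : R => a <= b) f, (forall x, A0 x -> f x = 1) &
  (forall x, B0 x -> f x = 0)].
Proof.
exists f; split.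
- exact: f_cont.
- exact: f_bound.
- exact: f_iso.
- move=> x Ax; apply/eqP; rewrite eq_le; case/andP: (f_bound x) => _ -> /=.
  apply: lb_le_inf; first by exists (g 0%N x), 0%N.
  move=> _ [n _ <-]; rewrite /g /cnt (eq_bigr (fun _ => 1)).
    by rewrite sumr_const card_ord natrX w_exp.
  move=> k _; apply: nin_out; have [IH1 _] := InvP n.
  by have [_ _ h] := IH1 k (ltnW (ltn_ord k)); move=> Ux; exact: (h x Ux Ax).
- move=> x Bx; apply/eqP; rewrite eq_le; case/andP: (f_bound x) => -> _; rewrite andbT.
  apply: le_trans (f_le 0 x) _; rewrite /g /cnt big1 ?mul0r // => k _.
  apply: nin_in; have [_ IH2] := InvP 0.
  by have [_ _ _ _ /(_ x)] := IH2 k (ltn_ord k); apply.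
Qed.

End Nachbin.

Lemma urys (R : realType) (X : topologicalType) :
  compact [set: X] -> hausdorff_space X -> forall A B : set X, closed A -> closed B ->
  A `&` B = set0 -> exists h : X -> R, [/\ cont01 h, (forall x, A x -> h x = 0) &
     (forall x, B x -> h x = 1)].
Proof.
move=> cX hX A B cA cB AB.
have [h [hc hA hB hr]] := @urysohn_ext_itv X R (compact_normal hX cX) A B 0 1 cA cB AB ltr01.
exists h; split.
- split => // x; have := hr (h x) (ex_intro2 _ _ x I erefl).
  by rewrite /= in_itv /=.
- by move=> x Ax; apply: (hA (h x)); exists x.
- by move=> x Bx; apply: (hB (h x)); exists x.
Qed.

Lemma closed1 (X : topologicalType) (a : X) : hausdorff_space X -> closed [set a].
Proof. by move=> hX; apply: accessible_closed_set1; exact: hausdorff_accessible. Qed.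

Theorem mainTheorem4 (R : realType) (E : topologicalType) (le : E -> E -> Prop)
  (hT2 : T2_preordered le) (hTy : tychonoff_space R E)
  (hG : forall x y : E, le x y <->
          (forall f : E -> R, cont_isotone01 le f -> f x <= f y))
  (bE : topologicalType) (beta : E -> bE) (hbeta : stone_cech R beta) :
  [/\ hausdorff_T2_preorder_compactification le (le_beta R le beta) beta,
      (forall (cE : topologicalType) (lec : cE -> cE -> Prop) (c : E -> cE),
         hausdorff_T2_preorder_compactification le lec c ->
         dominates lec (le_beta R le beta) c beta) &
      (forall f : E -> R, cont_isotone01 le f ->
         exists g : bE -> R, [/\ cont01 g, (forall x, g (beta x) = f x) &
                                 isotone (le_beta R le beta) (fun a b : R => a <= b) g])].
Proof.
case: hbeta => cbE hbE embb densb extb.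
split.
- split => //.
  + split => //.
    * split; first by move=> p f _ g _ _.
      move=> p q r hpq hqr f hf g gc gext.
      exact: le_trans (hpq f hf g gc gext) (hqr f hf g gc gext).
    * split => //.
        move=> x y hxy f hf g gc gext; rewrite !gext.
        by case: hf => _; apply.
      move=> x y h; apply/hG => f hf.
      have [g [[gc _] gext]] := extb f hf.1.
      by have := h f hf g gc gext; rewrite !gext.
  + move=> [p q] clpq f hf g gc gext /=.
    rewrite leNgt; apply/negP => gqp.
    set m := (g p + g q) / 2.
    have h1 : \forall p' \near p, m < g p'.
      by apply: (cvgr_gt (g p)) => //; [exact: gc | rewrite /m; lra].
    have h2 : \forall q' \near q, g q' < m.
      by apply: (cvgr_lt (g q)) => //; [exact: gc | rewrite /m; lra].
    have nPQ : nbhs (p, q) ([set x | m < g x] `*` [set x | g x < m]).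
      by exists ([set x | m < g x], [set x | g x < m]).
    have [[p' q'] [/= hle [/= hp hq]]] := clpq _ nPQ.
    by have := hle f hf g gc gext; lra.
- move=> cE lec c [[pre_c ccE [[injc contc _] isoc refc] dens] hcE cGc].
  pose Q p a := forall h : cE -> R, cont01 h -> forall g : bE -> R, continuous g ->
    (forall x, g (beta x) = h (c x)) -> g p = h a.
  have hc01 (h : cE -> R) : cont01 h -> cont01 (h \o c).
    case=> hc hb; split => [x|x]; last exact: hb.
    exact: continuous_comp (contc x) (hc (c x)).
  have Quniq p a a' : Q p a -> Q p a' -> a = a'.
    move=> Qa Qa'; apply: contrapT => aa'.
    have dis : [set a] `&` [set a'] = set0.
      by apply/seteqP; split => // z [/= za za']; apply: aa'; rewrite -za -za'.
    have [h [hc h0 h1]] := @urys R cE ccE hcE [set a] [set a'] (@closed1 cE a hcE)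
      (@closed1 cE a' hcE) dis.
    have [g [[gc _] gext]] := extb _ (hc01 h hc).
    have := Qa h hc g gc gext; have := Qa' h hc g gc gext.
    by rewrite (h0 a) // (h1 a') // => -> /eqP; rewrite oner_eq0.
  have exQ p : exists a, Q p a.
    pose FF := filter_from (nbhs p) (fun N => c @` (beta @^-1` N)).
    have FFf : Filter FF.
      apply: filter_from_filter; first by exists setT; exact: filterT.
      move=> N1 N2 n1 n2; exists (N1 `&` N2); first exact: filterI.
      by move=> _ [x [h1 h2] <-]; split; exists x.
    have FFp : ProperFilter FF.
      apply: filter_from_proper => // N; rewrite nbhsE => -[W0 [hO Op] ON].
      have [z [Oz [x _ xz]]] := densb W0 (ex_intro _ p Op) hO.
      by exists (c x); exists x => //; apply: ON; rewrite /= xz.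
    have [a [_ cla]] := ccE FF FFp (@filterT _ FF FFf).
    exists a => h hc g gc gext.
    apply: contrapT => neq.
    set d := `|g p - h a|.
    have d0 : 0 < d by rewrite normr_gt0 subr_eq0; apply/eqP.
    have d20 : 0 < d / 2 by rewrite divr_gt0.
    have n1 : \forall q \near p, `|g p - g q| < d / 2 := @cvgr_dist_lt _ _ _ (nbhs p) _ g (g p) (gc p) _ d20.
    have n2 : \forall z \near a, `|h a - h z| < d / 2 := @cvgr_dist_lt _ _ _ (nbhs a) _ h (h a) (hc.1 a) _ d20.
    have n1' : FF (c @` (beta @^-1` [set q | `|g p - g q| < d / 2])) by exists [set q | `|g p - g q| < d / 2]; [exact: n1|].
    have [z [[x n1x <-] n2z]] := cla _ _ n1' (n2 _).
    have := ler_distD (g (beta x)) (g p) (h a).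
    rewrite -/d gext (distrC (h (c x))).
    rewrite /= gext in n1x; rewrite /= in n2z; lra.
  pose C p := projT1 (cid (exQ p)).
  have CQ p : Q p (C p) := projT2 (cid (exQ p)).
  exists C; split.
  - move=> p V nV.
    move: nV; rewrite nbhsE => -[W0 [hO Op] WV].
    have dis : [set C p] `&` ~` W0 = set0.
      by apply/seteqP; split => // z [/= -> ]; apply.
    have [h [hc h0 h1]] := @urys R cE ccE hcE [set C p] (~` W0) (@closed1 cE (C p) hcE)
      (open_closedC hO) dis.
    have [g [[gc _] gext]] := extb _ (hc01 h hc).
    have gq q : g q = h (C q) := CQ q h hc g gc gext.
    have g0 : g p < 1 / 2 by rewrite gq h0 //= divr_gt0.
    have := @cvgr_lt _ _ (nbhs p) _ g (g p) (gc p) _ g0.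
    move=> H; change (nbhs p (C @^-1` V)); apply: filterS (H _) => q /= hq.
    apply: WV; apply: contrapT => nW.
    by move: hq; rewrite gq h1 //; lra.
  - move=> p q hpq; apply: contrapT => npq.
    case: pre_c => lrefl ltrans.
    have cA : closed [set z | lec (C p) z].
      have -> : [set z | lec (C p) z] = [set y | exists2 k, [set C p] k & lec k y].
        by apply/seteqP; split => z /=; [move=> hz; exists (C p) | case=> k -> ].
      exact: up_closed ccE cGc _ (@closed1 cE (C p) hcE).
    have cB : closed [set z | lec z (C q)].
      have -> : [set z | lec z (C q)] = [set y | exists2 k, [set C q] k & lec y k].
        by apply/seteqP; split => z /=; [move=> hz; exists (C q) | case=> k -> ].
      exact: down_closed ccE cGc _ (@closed1 cE (C q) hcE).
    have iA : incr lec [set z | lec (C p) z] by move=> x y xy /= px; exact: ltrans px xy.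
    have dB : decr lec [set z | lec z (C q)] by move=> x y xy /= yq; exact: ltrans xy yq.
    have AB : [set z | lec (C p) z] `&` [set z | lec z (C q)] = set0.
      by apply/seteqP; split => // z [/= h1 h2]; apply: npq; exact: ltrans h1 h2.
    have [h [hcont hb hiso hA hB]] := nachbin_sep R ccE hcE (conj lrefl ltrans) cGc cA cB iA dB AB.
    have hc : cont01 h by [].
    have hF : cont_isotone01 le (h \o c).
      split; first exact: hc01.
      by move=> x y xy; apply: hiso; apply: isoc.
    have [g [[gc _] gext]] := extb _ (hc01 h hc).
    have := hpq _ hF g gc gext.
    rewrite (CQ p h hc g gc gext) (CQ q h hc g gc gext) hA /= ?hB /=; last exact: lrefl.
      by rewrite ler10.
    exact: lrefl.
  - move=> x; apply: Quniq (CQ (beta x)) _.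
    by move=> h hc g gc gext; exact: gext.
- move=> f hf; have [g [gc gext]] := extb f hf.1.
  exists g; split => // p q hpq; exact: hpq f hf g gc.1 gext.
Qed.
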